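(* A bijection $\kappa:\mathcal G\to\mathcal G$ is an automorphism of the Grassmann graph $(\mathcal G,\sim)$ (i.e. $X\sim Y\iff X^\kappa\sim Y^\kappa$ for all $X,Y\in\mathcal G$) if and only if it is a collineation of the Grassmann space $(\mathcal G,\mathfrak P)$ (i.e. $\kappa$ and $\kappa^{-1}$ map pencils onto pencils).
   Context: $K$ is a (not necessarily commutative) field and $V$ is a left vector space over $K$ of arbitrary (possibly infinite) dimension with $\dim V>2$. $\mathcal G:=\{X\le V\mid X\cong V/X\}$, assumed nonempty. $X,Y\in\mathcal G$ are adjacent ($X\sim Y$) if $\dim((X+Y)/X)=\dim((X+Y)/Y)=1$. A pencil is a set $\mathcal G[M,N]:=\{X\in\mathcal G\mid M<X<N\}$, where $M,N\le V$ are subspaces such that there exists $X\in\mathcal G$ with $M\le X\le N$ and $\dim(X/M)=\dim(N/X)=1$; $\mathfrak P$ denotes the set of all pencils. *)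

(* Defs.v *)
(* K : a (possibly non-commutative) field = unitRingType in
   which every nonzero element is a unit; V : left K-module (lmodType K). *)
From mathcomp Require Import all_boot all_algebra.
Set Implicit Arguments. Unset Strict Implicit. Unset Printing Implicit Defensive.
Import GRing.Theory.
Local Open Scope ring_scope.

Section Grass.
Variables (K : unitRingType) (V : lmodType K).

Definition subspace (S : V -> Prop) : Prop :=
  S 0 /\ forall (a : K) (x y : V), S x -> S y -> S (a *: x + y).

Definition subsp_le (S T : V -> Prop) : Prop := forall x, S x -> T x.

Definition subsp_lt (S T : V -> Prop) : Prop :=
  subsp_le S T /\ exists x, T x /\ ~ S x.

Definition sumsp (X Y : V -> Prop) : V -> Prop :=
  fun w => exists x y, X x /\ Y y /\ w = x + y.

(* dim (Z / X) = 1  (for X <= Z): Z = X + K v with v not in X *)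
Definition codim1 (X Z : V -> Prop) : Prop :=
  exists v, ~ X v /\ forall w, Z w <-> exists (a : K) x, X x /\ w = x + a *: v.

(* X is isomorphic to V/X: there is a K-linear map f : X -> V such that
   x |-> f x + X is a bijection X -> V/X. *)
Definition iso_quot (X : V -> Prop) : Prop :=
  exists f : V -> V,
    (forall (a : K) x y, X x -> X y -> f (a *: x + y) = a *: f x + f y) /\
    (forall x, X x -> X (f x) -> x = 0) /\
    (forall v, exists x, X x /\ X (v - f x)).

Definition inG (X : V -> Prop) : Prop := subspace X /\ iso_quot X.

Definition Gr : Type := {X : V -> Prop | inG X}.

Definition adj (X Y : V -> Prop) : Prop :=
  codim1 X (sumsp X Y) /\ codim1 Y (sumsp X Y).

Definition is_pencil (P : Gr -> Prop) : Prop :=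
  exists M N : V -> Prop, subspace M /\ subspace N /\
    (exists X : Gr, subsp_le M (proj1_sig X) /\ subsp_le (proj1_sig X) N /\
        codim1 M (proj1_sig X) /\ codim1 (proj1_sig X) N) /\
    (forall X : Gr, P X <-> (subsp_lt M (proj1_sig X) /\ subsp_lt (proj1_sig X) N)).

Definition image_set (k : Gr -> Gr) (P : Gr -> Prop) : Gr -> Prop :=
  fun Y => exists X, P X /\ k X = Y.

Definition preimage_set (k : Gr -> Gr) (P : Gr -> Prop) : Gr -> Prop :=
  fun X => P (k X).

Definition dim_gt2 : Prop :=
  exists u v w : V, forall a b c : K,
    a *: u + b *: v + c *: w = 0 -> a = 0 /\ b = 0 /\ c = 0.

End Grass.

(* Main.v *)
Require Import Defs.
From mathcomp Require Import all_boot all_algebra.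
From mathcomp Require classical_sets.
From Stdlib Require Import FunctionalExtensionality PropExtensionality ProofIrrelevance Classical ClassicalEpsilon.
Set Implicit Arguments. Unset Strict Implicit. Unset Printing Implicit Defensive.
Import GRing.Theory.
Local Open Scope ring_scope.


Section Basic.
Variables (K : unitRingType) (V : lmodType K).
Hypothesis HK : forall x : K, x != 0 -> x \is a GRing.unit.

Definition spn (S : V -> Prop) (v : V) : V -> Prop :=
  fun w => exists (a : K) x, S x /\ w = x + a *: v.
Definition cap (S T : V -> Prop) : V -> Prop := fun w => S w /\ T w.

Lemma pe (S T : V -> Prop) : (forall v, S v <-> T v) -> S = T.
Proof.
move=> H; apply: functional_extensionality => v; apply: propositional_extensionality; exact: H.
Qed.

Lemma le_antisym (S T : V -> Prop) : subsp_le S T -> subsp_le T S -> S = T.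
Proof. by move=> h1 h2; apply: pe => v; split; [apply: h1|apply: h2]. Qed.

Lemma invK (a : K) : a != 0 -> a^-1 * a = 1.
Proof. by move=> h; rewrite mulVr // HK. Qed.

Variable S : V -> Prop.
Hypothesis HS : subspace S.

Lemma sub0 : S 0. Proof. by case: HS. Qed.
Lemma subD x y : S x -> S y -> S (x + y).
Proof. by move=> hx hy; have := (proj2 HS) 1 x y hx hy; rewrite scale1r. Qed.
Lemma subZ a x : S x -> S (a *: x).
Proof. by move=> hx; have := (proj2 HS) a x 0 hx sub0; rewrite addr0. Qed.
Lemma subN x : S x -> S (- x).
Proof. by move=> hx; have := subZ (-1) hx; rewrite scaleN1r. Qed.
Lemma subB x y : S x -> S y -> S (x - y).
Proof. by move=> hx hy; apply: subD => //; apply: subN. Qed.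

Lemma sub_spn v : subspace (spn S v).
Proof.
split; first by exists 0, 0; rewrite scale0r addr0; split=> //; exact: sub0.
move=> a x y [a1 [x1 [h1 ->]]] [a2 [x2 [h2 ->]]].
exists (a * a1 + a2), (a *: x1 + x2); split; first exact: (proj2 HS).
by rewrite scalerDr scalerA scalerDl addrACA.
Qed.

Lemma spn_le v : subsp_le S (spn S v).
Proof. by move=> x hx; exists 0, x; rewrite scale0r addr0. Qed.

Lemma spn_v v : spn S v v.
Proof. by exists 1, 0; rewrite scale1r add0r; split=> //; exact: sub0. Qed.

End Basic.

Section Basic2.
Variables (K : unitRingType) (V : lmodType K).
Hypothesis HK : forall x : K, x != 0 -> x \is a GRing.unit.

Lemma spn_min (S T : V -> Prop) v : subspace T -> subsp_le S T -> T v ->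
  subsp_le (spn S v) T.
Proof.
move=> hT hST hv w [a [x [hx ->]]]; apply: subD => //; [exact: hST|exact: subZ].
Qed.

Lemma sub_cap (S T : V -> Prop) : subspace S -> subspace T -> subspace (cap S T).
Proof.
move=> hS hT; split; first by split; apply: sub0.
by move=> a x y [h1 h2] [h3 h4]; split; [apply: (proj2 hS)|apply: (proj2 hT)].
Qed.

Lemma sub_sum (S T : V -> Prop) : subspace S -> subspace T -> subspace (sumsp S T).
Proof.
move=> hS hT; split; first by exists 0, 0; rewrite addr0; split; [apply: sub0 | split; [apply: sub0|]].
move=> a x y [x1 [y1 [h1 [h2 ->]]]] [x2 [y2 [h3 [h4 ->]]]].
exists (a *: x1 + x2), (a *: y1 + y2); split; first exact: (proj2 hS).
split; first exact: (proj2 hT).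
by rewrite scalerDr addrACA.
Qed.

Lemma sum_l (S T : V -> Prop) : subspace T -> subsp_le S (sumsp S T).
Proof. by move=> hT x hx; exists x, 0; rewrite addr0; split; [|split; [apply: sub0|]]. Qed.
Lemma sum_r (S T : V -> Prop) : subspace S -> subsp_le T (sumsp S T).
Proof. by move=> hS x hx; exists 0, x; rewrite add0r; split; [apply: sub0|]. Qed.
Lemma sum_min (S T U : V -> Prop) : subspace U -> subsp_le S U -> subsp_le T U ->
  subsp_le (sumsp S T) U.
Proof. by move=> hU h1 h2 w [x [y [hx [hy ->]]]]; apply: subD => //; [apply: h1|apply: h2]. Qed.
Lemma sumC (S T : V -> Prop) : sumsp S T = sumsp T S.
Proof.
by apply: pe => w; split=> -[x [y [hx [hy ->]]]]; exists y, x; rewrite addrC.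
Qed.

Lemma hyp_max (S U : V -> Prop) v u : subspace S -> subspace U -> ~ S v ->
  subsp_le S U -> subsp_le U (spn S v) -> U u -> ~ S u -> U = spn S v.
Proof.
move=> hS hU hv hSU hUS hu hnu; apply: le_antisym => //.
apply: spn_min => //.
have [a [s [hs es]]] := hUS u hu.
have a0 : a != 0.
  apply/negP => /eqP a0; apply: hnu; by rewrite es a0 scale0r addr0.
have -> : v = a^-1 *: u - a^-1 *: s.
  by rewrite es scalerDr addrAC subrr add0r scalerA (invK HK a0) scale1r.
by apply: subB => //; apply: subZ => //; apply: hSU.
Qed.

Lemma exch (T : V -> Prop) v u : subspace T -> ~ T v -> spn T v u -> ~ T u ->
  spn T u = spn T v.
Proof.
move=> hT hv hu hnu; refine (@hyp_max T (spn T u) v u hT (sub_spn hT u) hv _ _ _ _).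
- exact: spn_le.
- apply: spn_min => //; [exact: sub_spn|exact: spn_le].
- exact: spn_v.
- exact: hnu.
Qed.

Lemma spn_in (T : V -> Prop) v : subspace T -> T v -> spn T v = T.
Proof. by move=> hT hv; apply: le_antisym; [apply: spn_min|apply: spn_le]. Qed.

Lemma addvC (M : V -> Prop) p q : subspace M -> spn (spn M p) q = spn (spn M q) p.
Proof.
move=> hM; apply: pe => w; split=> -[a [x [[b [m [hm ->]]] ->]]].
- exists b, (m + a *: q); (split; first by exists a, m; split); by rewrite addrAC.
- exists b, (m + a *: p); (split; first by exists a, m; split); by rewrite addrAC.
Qed.

Lemma spn_mono (S T : V -> Prop) v : subspace T -> subsp_le S T -> subsp_le (spn S v) (spn T v).
Proof. by move=> hT h w [a [x [hx ->]]]; exists a, x; split=> //; apply: h. Qed.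

Lemma lemE (M : V -> Prop) a b u v : subspace M ->
  spn (spn M a) b u -> ~ M u -> spn (spn M a) b v -> ~ spn M u v ->
  spn (spn M a) b = spn (spn M u) v.
Proof.
move=> hM hu hnu hv hnv.
have hMa := sub_spn hM a.
have [c [HN Hc]] : exists c, spn (spn M a) b = spn (spn M u) c /\ True.
  case: (classic (spn M a u)) => hua.
  - have na : ~ M a.
      move=> ha; apply: hnu; by rewrite (spn_in hM ha) in hua.
    by exists b; rewrite (exch hM na hua hnu).
  - have nb : ~ spn M a b.
      move=> hb; apply: hua; by rewrite (spn_in hMa hb) in hu.
    exists a; split=> //; rewrite -(exch hMa nb hu hua); exact: addvC.
rewrite HN in hv *; have hMu := sub_spn hM u.
have nc : ~ spn M u c.
  move=> hc; apply: hnv; by rewrite (spn_in hMu hc) in hv.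
by symmetry; apply: exch.
Qed.

Lemma sum_addv (X M : V -> Prop) y : subspace X -> subspace M -> subsp_le M X ->
  sumsp X (spn M y) = spn X y.
Proof.
move=> hX hM hMX; apply: pe => w; split.
- move=> [x [z [hx [[a [m [hm ->]]] ->]]]].
  exists a, (x + m); split; first by apply: subD => //; apply: hMX.
  by rewrite addrA.
- move=> [a [x [hx ->]]]; exists x, (a *: y); split=> //; split=> //.
  by exists a, 0; rewrite add0r; split=> //; apply: sub0.
Qed.

End Basic2.


Section Grass2.
Variables (K : unitRingType) (V : lmodType K).
Hypothesis HK : forall x : K, x != 0 -> x \is a GRing.unit.
Implicit Types (S T X Y Z M N A B W : V -> Prop).

Lemma codim1E S Z : codim1 S Z <-> exists v, ~ S v /\ Z = spn S v.
Proof.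
split=> -[v [hv h]]; exists v; split=> //; first exact: pe.
by move=> w; rewrite h.
Qed.

Lemma Gr_eq (X Y : Gr V) : proj1_sig X = proj1_sig Y -> X = Y.
Proof.
case: X => X hX; case: Y => Y hY /= e; subst; f_equal; exact: proof_irrelevance.
Qed.

Lemma adj_struct X Y : subspace X -> subspace Y -> adj X Y ->
  exists x y, X x /\ ~ Y x /\ Y y /\ ~ X y /\
    X = spn (cap X Y) x /\ Y = spn (cap X Y) y /\
    sumsp X Y = spn X y /\ sumsp X Y = spn Y x.
Proof.
move=> hX hY [/codim1E [v [hv ev]] /codim1E [u [hu eu]]].
have hS := sub_sum hX hY.
have [y [hy nyX]] : exists y, Y y /\ ~ X y.
  apply: NNPP => hn; apply: hv.
  have : subsp_le (sumsp X Y) X.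
    apply: sum_min => // z hz; apply: NNPP => nz; apply: hn; by exists z.
  by apply; rewrite ev; apply: spn_v.
have [x [hx nxY]] : exists x, X x /\ ~ Y x.
  apply: NNPP => hn; apply: hu.
  have : subsp_le (sumsp X Y) Y.
    apply: sum_min => // z hz; apply: NNPP => nz; apply: hn; by exists z.
  by apply; rewrite eu; apply: spn_v.
have e1 : sumsp X Y = spn X y.
  rewrite ev; symmetry; apply: exch => //; rewrite -ev; exact: sum_r.
have e2 : sumsp X Y = spn Y x.
  rewrite eu; symmetry; apply: exch => //; rewrite -eu; exact: sum_l.
have hC := sub_cap hX hY.
exists x, y; do 4 (split=> //); split; last split=> //.
- apply: le_antisym; last by apply: spn_min => // z [].
  move=> z hz; have : sumsp X Y z by apply: sum_l.
  rewrite e2 => -[a [t [ht ez]]]; exists a, t; split=> //; split=> //.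
  have -> : t = z - a *: x by rewrite ez addrK.
  by apply: subB => //; apply: subZ.
- apply: le_antisym; last by apply: spn_min => // z [].
  move=> z hz; have : sumsp X Y z by apply: sum_r.
  rewrite e1 => -[a [t [ht ez]]]; exists a, t; split=> //; split=> //.
  have -> : t = z - a *: y by rewrite ez addrK.
  by apply: subB => //; apply: subZ.
Qed.

Lemma adj_irr X : subspace X -> ~ adj X X.
Proof.
move=> hX [/codim1E [v [hv ev]] _]; apply: hv.
have : sumsp X X v by rewrite ev; apply: spn_v.
by apply: sum_min.
Qed.

Lemma adj_star M a b : subspace M -> ~ M a -> ~ M b -> spn M a <> spn M b ->
  adj (spn M a) (spn M b).
Proof.
move=> hM ha hb ne.
have nab : ~ spn M a b.
  move=> h; apply: ne; symmetry; exact: exch.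
have nba : ~ spn M b a.
  move=> h; apply: ne; exact: exch.
have hMa := sub_spn hM a; have hMb := sub_spn hM b.
split; apply/codim1E.
- exists b; split=> //; apply: sum_addv => //; exact: spn_le.
- exists a; split=> //; rewrite sumC; apply: sum_addv => //; exact: spn_le.
Qed.

Lemma adj_top A B N : subspace A -> subspace B -> subspace N -> codim1 A N -> codim1 B N ->
  A <> B -> adj A B.
Proof.
move=> hA hB hN /codim1E [a [ha ea]] /codim1E [b [hb eb]] ne.
have hAN : subsp_le A N by rewrite ea; apply: spn_le.
have hBN : subsp_le B N by rewrite eb; apply: spn_le.
have hS := sub_sum hA hB.
have eS : sumsp A B = N.
  have [c [hc nc]] : exists c, B c /\ ~ A c.
    apply: NNPP => hn; apply: ne.
    have BA : subsp_le B A.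
      move=> z hz; apply: NNPP => nz; apply: hn; by exists z.
    apply: le_antisym => //.
    (* A <= B: otherwise N <= A *)
    move=> z hz; apply: NNPP => nz.
    have eA : A = spn B b by apply: (hyp_max HK hB hA hb BA); [rewrite -eb|exact: hz|].
    by apply: ha; rewrite eA -eb ea; apply: spn_v.
  rewrite ea; refine (@hyp_max _ _ HK A (sumsp A B) a c hA hS ha (@sum_l _ _ A B hB) _ _ nc).
  - by rewrite -ea; apply: sum_min.
  - by apply: sum_r hc.
split; rewrite eS; apply/codim1E; [exists a|exists b]; by split.
Qed.

End Grass2.


Section Grass3.
Variables (K : unitRingType) (V : lmodType K).
Hypothesis HK : forall x : K, x != 0 -> x \is a GRing.unit.
Implicit Types (S T X Y Z M N A B W : V -> Prop).

Definition Line X Y Z := subsp_lt (cap X Y) Z /\ subsp_lt Z (sumsp X Y).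

Lemma pencil_member M X0 N Z : subspace M -> subspace X0 -> subspace N -> subspace Z ->
  codim1 M X0 -> codim1 X0 N -> subsp_lt M Z -> subsp_lt Z N ->
  exists z, ~ M z /\ Z = spn M z /\ codim1 Z N.
Proof.
move=> hM hX0 hN hZ /codim1E [x0 [hx0 e0]] /codim1E [n [hn en]] [hMZ [z [hz nz]]] [hZN [n' [hn' nn']]].
subst X0.
have hzN : spn (spn M x0) n z by rewrite -en; apply: hZN.
have hnN : spn (spn M x0) n n' by rewrite -en.
have ez : Z = spn M z.
  apply: le_antisym; last by apply: spn_min.
  move=> t ht; apply: NNPP => nt.
  have htN : spn (spn M x0) n t by rewrite -en; apply: hZN.
  have e := lemE HK hM hzN nz htN nt.
  apply: nn'; move: hn'; rewrite en e; apply: spn_min => //; by apply: spn_min.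
exists z; split=> //; split=> //.
apply/codim1E; exists n'; split=> //.
rewrite en ez; apply: lemE => //; by rewrite -ez.
Qed.

Lemma pencil_adj (P : Gr V -> Prop) (X Y : Gr V) : is_pencil P -> P X -> P Y -> X <> Y ->
  adj (proj1_sig X) (proj1_sig Y).
Proof.
move=> [M [N [hM [hN [[X0 [_ [_ [c1 c2]]]] hP]]]]] /hP [l1 l2] /hP [l3 l4] ne.
have hX0 := proj1 (proj2_sig X0).
have hX := proj1 (proj2_sig X).
have hY := proj1 (proj2_sig Y).
have [x [nx [ex _]]] := pencil_member hM hX0 hN hX c1 c2 l1 l2.
have [y [ny [ey _]]] := pencil_member hM hX0 hN hY c1 c2 l3 l4.
rewrite ex ey; apply: adj_star => //.
by rewrite -ex -ey => e; apply: ne; apply: Gr_eq.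
Qed.

Lemma in_line X Y : subspace X -> subspace Y -> adj X Y -> Line X Y X /\ Line X Y Y.
Proof.
move=> hX hY h; have [x [y [hx [nx [hy [ny [ex [ey [e1 e2]]]]]]]]] := adj_struct HK hX hY h.
split; split.
- split; first by move=> z [].
  by exists x; split=> // -[].
- split; first exact: sum_l.
  by exists y; split=> //; apply: sum_r.
- split; first by move=> z [].
  by exists y; split=> // -[].
- split; first exact: sum_r.
  by exists x; split=> //; apply: sum_l.
Qed.

Lemma pencil_line (X Y : Gr V) : adj (proj1_sig X) (proj1_sig Y) ->
  is_pencil (fun Z : Gr V => Line (proj1_sig X) (proj1_sig Y) (proj1_sig Z)).
Proof.
move=> h; have hX := proj1 (proj2_sig X); have hY := proj1 (proj2_sig Y).
have [x [y [hx [nx [hy [ny [ex [ey [e1 e2]]]]]]]]] := adj_struct HK hX hY h.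
exists (cap (proj1_sig X) (proj1_sig Y)), (sumsp (proj1_sig X) (proj1_sig Y)).
split; first exact: sub_cap.
split; first exact: sub_sum.
split=> //; exists X; split; first by move=> z [].
split; first exact: sum_l.
split; apply/codim1E; [exists x|exists y]; split=> //; by case.
Qed.

Lemma common_nb X Y W : subspace X -> subspace Y -> subspace W ->
  adj X Y -> adj W X -> adj W Y ->
  subsp_le (cap X Y) W \/ subsp_le W (sumsp X Y).
Proof.
move=> hX hY hW hXY hWX hWY.
case: (classic (subsp_le (cap X Y) W)) => h; [by left|right].
have [m [hm nm]] : exists m, cap X Y m /\ ~ W m.
  apply: NNPP => hn; apply: h => z hz; apply: NNPP => nz; apply: hn; by exists z.
have [w [_ [_ [_ [_ [_ [ew _]]]]]]] := adj_struct HK hW hX hWX.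
have [_ [y1 [_ [_ [hy1 [ny1 [_ [ey _]]]]]]]] := adj_struct HK hW hY hWY.
have hWY' := sub_cap hW hY; have hWX' := sub_cap hW hX.
have eY : Y = spn (cap W Y) m.
  have n1 : ~ cap W Y y1 by case.
  have n2 : ~ cap W Y m by case.
  have h2 : spn (cap W Y) y1 m by rewrite -ey; case: hm.
  by rewrite {1}ey (exch HK hWY' n1 h2 n2).
have [_ [y [_ [_ [hy [nyX _]]]]]] := adj_struct HK hX hY hXY.
have hS := sub_sum hX hY.
have [c [wy [[hwy1 hwy2] ey']]] : spn (cap W Y) m y by rewrite -eY.
have nwy : ~ X wy.
  move=> hxwy; apply: nyX; rewrite ey'; apply: subD => //; apply: subZ => //; by case: hm.
have [d [u [[hu1 hu2] eu]]] : spn (cap W X) w wy by rewrite -ew.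
have d0 : d != 0.
  apply/negP => /eqP d0; apply: nwy; by rewrite eu d0 scale0r addr0.
rewrite {1}ew; apply: spn_min => //; first by move=> z [_ hz]; apply: sum_l.
have -> : w = d^-1 *: wy - d^-1 *: u.
  by rewrite eu scalerDr addrAC subrr add0r scalerA (invK HK d0) scale1r.
apply: subB => //; apply: subZ => //; [exact: sum_r|exact: sum_l].
Qed.

Lemma star_of W X M x : subspace W -> subspace X -> subspace M -> adj W X ->
  subsp_le M W -> X = spn M x -> ~ M x -> exists w, ~ M w /\ W = spn M w.
Proof.
move=> hW hX hM h hMW eX nx.
have [w [x1 [hw [nw [hx1 [nx1 [ew _]]]]]]] := adj_struct HK hW hX h.
have eC : cap W X = M.
  apply: le_antisym; last by move=> z hz; split; [apply: hMW|rewrite eX; apply: spn_le].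
  move=> t ht; apply: NNPP => nt.
  have e : cap W X = spn M x.
    refine (@hyp_max _ _ HK M (cap W X) x t hM (sub_cap hW hX) nx _ _ ht nt).
    - by move=> z hz; split; [apply: hMW|rewrite eX; apply: spn_le].
    - by rewrite -eX => z [].
  have : cap W X x1 by rewrite e -eX.
  by case.
exists w; split; first by move=> hmw; apply: nw; rewrite eX; apply: spn_le.
by rewrite -eC.
Qed.

Lemma top_of W X N y : subspace W -> subspace X -> subspace N -> adj W X ->
  subsp_le W N -> N = spn X y -> ~ X y -> codim1 W N.
Proof.
move=> hW hX hN h hWN eN ny.
have [w1 [x1 [hw1 [nw1 [hx1 [nx1 [_ [_ [e1 e2]]]]]]]]] := adj_struct HK hW hX h.
have eS : sumsp W X = N.
  rewrite eN; apply: (hyp_max HK hX (sub_sum hW hX) ny (@sum_r _ _ W X hW)).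
  - by rewrite -eN; apply: sum_min => //; rewrite eN; apply: spn_le.
  - by apply: sum_l hw1.
  - exact: nw1.
by apply/codim1E; exists x1; split=> //; rewrite -eS.
Qed.

End Grass3.


Section Zorn.
Variables (K : unitRingType) (V : lmodType K).
Hypothesis HK : forall x : K, x != 0 -> x \is a GRing.unit.
Implicit Types (S T X Y Z M N A B W H : V -> Prop).

Lemma zorn_hyp S w : subspace S -> ~ S w -> exists H, subspace H /\ subsp_le S H /\ ~ H w /\
  forall v, exists a, H (v - a *: w).
Proof.
move=> hS nw.
pose U (A : V -> Prop) := fun v => A v \/ S v.
pose P (A : V -> Prop) := (forall a x y, U A x -> U A y -> U A (a *: x + y)) /\ ~ A w.
have [A [[cA nA] maxA]] : exists A, P A /\ (forall B, classical_sets.proper A B -> ~ P B).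
  apply: classical_sets.Zorn_bigcup => F FP Ftot; split.
  - move=> a x y hx hy.
    have hS' : forall u, S u -> U (classical_sets.bigcup F id) u by move=> u hu; right.
    case: hx => [[X FX Xx]|Sx]; case: hy => [[Y FY Yy]|Sy].
    + case: (Ftot X Y FX FY) => sub.
      * have := (proj1 (FP Y FY)) a x y (or_introl (sub x Xx)) (or_introl Yy).
        by case=> [h|h]; [left; exists Y|right].
      * have := (proj1 (FP X FX)) a x y (or_introl Xx) (or_introl (sub y Yy)).
        by case=> [h|h]; [left; exists X|right].
    + have := (proj1 (FP X FX)) a x y (or_introl Xx) (or_intror Sy).
      by case=> [h|h]; [left; exists X|right].
    + have := (proj1 (FP Y FY)) a x y (or_intror Sx) (or_introl Yy).
      by case=> [h|h]; [left; exists Y|right].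
    + by right; apply: (proj2 hS).
  - by move=> [X FX Xw]; apply: (proj2 (FP X FX)).
pose H := U A.
have hH : subspace H.
  split; first by right; apply: sub0.
  exact: cA.
have nH : ~ H w by case.
exists H; split=> //; split; first by move=> x hx; right.
split=> // v; apply: NNPP => hv.
pose B := fun z => exists c h, H h /\ z = h + c *: v.
have hB : forall z, U B z -> B z.
  move=> z [//|hz]; exists 0, z; split; [by right|by rewrite scale0r addr0].
apply: (maxA B).
- split.
  + move=> z hz; exists 0, z; split; [by left|by rewrite scale0r addr0].
  + move=> BA; have [c [h [hh ev]]] : B v by exists 1, 0; split; [apply: sub0|rewrite scale1r add0r].
    apply: hv; exists 0; rewrite scale0r subr0; by left; apply: BA; exists 1, 0; split; [apply: sub0|rewrite scale1r add0r].
- split.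
  + move=> a x y /hB [c1 [h1 [hh1 ->]]] /hB [c2 [h2 [hh2 ->]]]; left.
    exists (a * c1 + c2), (a *: h1 + h2); split; first by apply: (proj2 hH).
    by rewrite scalerDr scalerA scalerDl addrACA.
  + move=> [c [h [hh ew]]].
    have c0 : c != 0.
      apply/negP => /eqP c0; apply: nH; by rewrite ew c0 scale0r addr0.
    apply: hv; exists c^-1.
    have -> : v - c^-1 *: w = - (c^-1 *: h).
      by rewrite ew scalerDr scalerA (invK HK c0) scale1r opprD addrCA subrr addr0.
    by apply: subN => //; apply: subZ.
Qed.

End Zorn.


Section Func.
Variables (K : unitRingType) (V : lmodType K).
Hypothesis HK : forall x : K, x != 0 -> x \is a GRing.unit.
Implicit Types (S T X Y Z M N A B W H : V -> Prop).

Definition linf (mu : V -> K) := forall a v v', mu (a *: v + v') = a * mu v + mu v'.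

Lemma self0 (x : V) : x = x + x -> x = 0.
Proof. by move=> e; have := congr1 (fun t => t - x) e; rewrite subrr addrK. Qed.

Lemma linf0 mu : linf mu -> mu 0 = 0.
Proof.
move=> h; have := h 1 0 0; rewrite scale1r addr0 mul1r => e.
by have := congr1 (fun t => t - mu 0) e; rewrite subrr addrK.
Qed.
Lemma linfD mu u v : linf mu -> mu (u + v) = mu u + mu v.
Proof. by move=> h; have := h 1 u v; rewrite scale1r mul1r. Qed.
Lemma linfZ mu a u : linf mu -> mu (a *: u) = a * mu u.
Proof. by move=> h; have := h a u 0; rewrite addr0 linf0 // addr0. Qed.
Lemma linfN mu u : linf mu -> mu (- u) = - mu u.
Proof. by move=> h; rewrite -scaleN1r linfZ // mulN1r. Qed.
Lemma linfB mu u v : linf mu -> mu (u - v) = mu u - mu v.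
Proof. by move=> h; rewrite linfD // linfN. Qed.

Lemma functional S w : subspace S -> ~ S w -> exists mu : V -> K,
  linf mu /\ (forall s, S s -> mu s = 0) /\ mu w = 1.
Proof.
move=> hS nw; have [H [hH [hSH [nH hall]]]] := zorn_hyp HK hS nw.
have uniq : forall v a b, H (v - a *: w) -> H (v - b *: w) -> a = b.
  move=> v a b ha hb; apply/eqP; rewrite -subr_eq0; apply/eqP.
  apply: NNPP => ne; apply: nH.
  have e : (v - b *: w) - (v - a *: w) = (a - b) *: w.
    by rewrite scalerBl opprB addrC addrA subrK.
  have h1 : H ((a - b) *: w) by rewrite -e; apply: subB.
  have ne' : a - b != 0 by apply/eqP.
  have := subZ hH ((a - b)^-1) h1; by rewrite scalerA (invK HK ne') scale1r.
pose mu v := proj1_sig (constructive_indefinite_description _ (hall v)).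
have muP : forall v, H (v - mu v *: w) by move=> v; exact: proj2_sig (constructive_indefinite_description _ (hall v)).
exists mu; split; last split.
- move=> a v v'; symmetry; apply: (uniq (a *: v + v')); last exact: muP.
  have e : a *: v + v' - (a * mu v + mu v') *: w = a *: (v - mu v *: w) + (v' - mu v' *: w).
    by rewrite scalerDl -scalerA opprD addrACA scalerBr.
  by rewrite e; apply: (proj2 hH); apply: muP.
- move=> s hs; symmetry; apply: (uniq s); last exact: muP.
  by rewrite scale0r subr0; apply: hSH.
- symmetry; apply: (uniq w); last exact: muP.
  by rewrite scale1r subrr; apply: sub0.
Qed.

Lemma inG_transport X (phi : V -> V) :
  (forall a u v, phi (a *: u + v) = a *: phi u + phi v) -> (forall v, phi (phi v) = v) ->
  inG X -> inG (fun v => X (phi v)).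
Proof.
move=> lin inv [hX [f [flin [finj fsur]]]].
have phi0 : phi 0 = 0.
  apply: self0; have := lin 1 0 0; rewrite !scale1r addr0; exact.
have phiD : forall u v, phi (u + v) = phi u + phi v.
  by move=> u v; have := lin 1 u v; rewrite !scale1r.
have phiN : forall u, phi (- u) = - phi u.
  move=> u; have := lin (-1) u 0; by rewrite addr0 phi0 addr0 !scaleN1r.
split.
- split; first by rewrite phi0; apply: sub0.
  by move=> a x y hx hy; rewrite lin; apply: (proj2 hX).
- exists (fun v => phi (f (phi v))); split; last split.
  + move=> a x y hx hy /=; by rewrite lin flin // lin.
  + move=> x hx; rewrite inv => hfx; rewrite -(inv x) (finj _ hx hfx) phi0 //.
  + move=> v; have [x' [hx' hr]] := fsur (phi v).
    exists (phi x'); split; first by rewrite inv.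
    by rewrite phiD phiN !inv.
Qed.

Lemma adj_inG X Y : inG X -> subspace Y -> adj X Y -> inG Y.
Proof.
move=> hG hY h; have hX := proj1 hG.
have [x [y [hx [nx [hy [ny [ex [ey _]]]]]]]] := adj_struct HK hX hY h.
have hC := sub_cap hX hY.
have [mu [lmu [mu0 mux]]] : exists mu : V -> K, linf mu /\ (forall s, spn (cap X Y) y s -> mu s = 0) /\ mu x = 1.
  by apply: functional; [apply: sub_spn|rewrite -ey].
have [nu [lnu [nu0 nuy]]] : exists nu : V -> K, linf nu /\ (forall s, spn (cap X Y) x s -> nu s = 0) /\ nu y = 1.
  by apply: functional; [apply: sub_spn|rewrite -ex].
pose lam v := mu v - nu v.
have llam : linf lam.
  move=> a u v; rewrite /lam lmu lnu mulrBr; by rewrite addrACA opprD.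
pose d := y - x.
have muy : mu y = 0 by apply: mu0; apply: spn_v.
have nux : nu x = 0 by apply: nu0; apply: spn_v.
have lamd : lam d = - 1 - 1.
  by rewrite /lam /d !linfB // muy mux nuy nux sub0r subr0.
pose phi v := v + lam v *: d.
have lin : forall a u v, phi (a *: u + v) = a *: phi u + phi v.
  move=> a u v; rewrite /phi llam scalerDl -scalerA [a *: (u + _)]scalerDr; by rewrite addrACA.
have inv : forall v, phi (phi v) = v.
  move=> v; rewrite /phi linfD // linfZ // lamd.
  have -> : lam v + lam v * (-1 - 1) = - lam v.
    by rewrite mulrBr mulrN1 addrA subrr add0r mulr1.
  by rewrite scaleNr -addrA subrr addr0.
have phiC : forall c, cap X Y c -> phi c = c.
  move=> c hc; rewrite /phi /lam mu0 ?nu0 ?subrr ?scale0r ?addr0 //; by exists 0, c; rewrite scale0r addr0.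
have phix : phi x = y by rewrite /phi /lam mux nux subr0 scale1r /d addrC subrK.
have phiy : phi y = x.
  by rewrite /phi /lam muy nuy sub0r scaleN1r /d opprB addrC subrK.
have -> : Y = (fun v => X (phi v)).
  apply: pe => v; split.
  - rewrite {1}ey => -[a [c [hc ->]]].
    by rewrite addrC lin phiy phiC // ex; exists a, c; rewrite addrC.
  - move=> hv; rewrite -(inv v).
    move: hv; rewrite {1}ex => -[a [c [hc ->]]].
    by rewrite addrC lin phix phiC // ey; exists a, c; rewrite addrC.
exact: inG_transport.
Qed.

End Func.


Section Dim.
Variables (K : unitRingType) (V : lmodType K).
Hypothesis HK : forall x : K, x != 0 -> x \is a GRing.unit.
Hypothesis Hdim : dim_gt2 V.
Implicit Types (S T X Y Z M N A B W H : V -> Prop).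

Definition Z0 : V -> Prop := fun t => t = 0.
Lemma sub_Z0 : subspace Z0.
Proof. by split=> // a x y -> ->; rewrite scaler0 addr0. Qed.

Lemma dim2 (a b : V) : ~ (forall v, exists c d, v = c *: a + d *: b).
Proof.
move=> hall; have [u [v [w hind]]] := Hdim.
have inN : forall t, spn (spn Z0 a) b t.
  move=> t; have [c [d ->]] := hall t; exists d, (c *: a); split=> //.
  by exists c, 0; rewrite add0r.
have n10 : (1 : K) <> 0 by apply/eqP; exact: oner_neq0.
have nm10 : (- 1 : K) <> 0 by apply/eqP; rewrite oppr_eq0; exact: oner_neq0.
case: (classic (u = 0)) => [u0|nu0].
  by apply: n10; apply: (proj1 (hind 1 0 0 _)); rewrite u0 !scale0r scaler0 !addr0.
case: (classic (spn Z0 u v)) => [[c [z [z0 ev]]]|nv].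
  apply: nm10; apply: (proj1 (proj2 (hind c (-1) 0 _))).
  by rewrite ev z0 add0r scale0r addr0 scaleN1r subrr.
have e := lemE HK sub_Z0 (inN u) nu0 (inN v) nv.
have := inN w; rewrite e => -[d [t [[c [z [z0 et]]] ew]]].
apply: nm10; apply: (proj2 (proj2 (hind c d (-1) _))).
by rewrite ew et z0 add0r scaleN1r subrr.
Qed.

Lemma inG_f X : inG X -> exists f : V -> V,
    (forall (a : K) x y, X x -> X y -> f (a *: x + y) = a *: f x + f y) /\
    (forall x, X x -> X (f x) -> x = 0) /\
    (forall v, exists x, X x /\ X (v - f x)) /\ f 0 = 0.
Proof.
move=> [hX [f [fl [fi fs]]]]; exists f; do 3 (split=> //).
apply: self0; have := fl 1 0 0 (sub0 hX) (sub0 hX); by rewrite !scale1r addr0.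
Qed.

Lemma dimA X y : inG X -> exists u, ~ spn X y u.
Proof.
move=> hG; have hX := proj1 hG; have [f [fl [fi [fs f0]]]] := inG_f hG.
apply: NNPP => hn.
have hall : forall u, spn X y u by move=> u; apply: NNPP => nu; apply: hn; exists u.
have [x0 [hx0 hy0]] := fs y.
have cl : forall x, X x -> exists a : K, x = a *: x0.
  move=> x hx; have [a [x1 [hx1 ef]]] := hall (f x).
  exists a.
  have h1 : X ((- a) *: x0 + x) by apply: (proj2 hX).
  have h2 : X (f ((- a) *: x0 + x)).
    rewrite fl // ef scaleNr addrCA -scalerN -scalerDr.
    by apply: subD => //; apply: subZ => //; rewrite addrC.
  have := fi _ h1 h2; rewrite scaleNr => /eqP; rewrite addrC subr_eq0 => /eqP //.
apply: (@dim2 x0 y) => v; have [b [x [hx ->]]] := hall v.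
by have [a ->] := cl x hx; exists a, b.
Qed.

Lemma dimB X M x : inG X -> subspace M -> X = spn M x -> exists m, M m /\ m <> 0.
Proof.
move=> hG hM eX; have hX := proj1 hG; have [f [fl [fi [fs f0]]]] := inG_f hG.
apply: NNPP => hn.
have hM0 : forall m, M m -> m = 0.
  by move=> m hm; apply: NNPP => nm; apply: hn; exists m.
apply: (@dim2 x (f x)) => v.
have [x' [hx' hr]] := fs v.
move: (hx') (hr); rewrite eX => -[a [m [hm ex']]] [b [m' [hm' er]]].
rewrite (hM0 _ hm) add0r in ex'; rewrite (hM0 _ hm') add0r in er.
exists b, a.
have hx : X x by rewrite eX; apply: spn_v.
have : f x' = a *: f x by rewrite ex' -[a *: x]addr0 fl ?f0 ?addr0 //; apply: sub0.
move=> efx; rewrite -efx -er; by rewrite subrK.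
Qed.

End Dim.


Section Main.
Variables (K : unitRingType) (V : lmodType K).
Hypothesis HK : forall x : K, x != 0 -> x \is a GRing.unit.
Hypothesis Hdim : dim_gt2 V.

Definition adjG (X Y : Gr V) := adj (proj1_sig X) (proj1_sig Y).
Definition GL (X Y Z : Gr V) := Z = X \/ Z = Y \/
  (adjG Z X /\ adjG Z Y /\ forall W, adjG W X -> adjG W Y -> W = Z \/ adjG W Z).
Definition LineG (X Y Z : Gr V) := Line (proj1_sig X) (proj1_sig Y) (proj1_sig Z).

Lemma adj_sym (A B : V -> Prop) : adj A B -> adj B A.
Proof. by rewrite /adj sumC => -[]. Qed.

Lemma adj_not_le (A B : V -> Prop) : subspace A -> subspace B -> adj A B -> subsp_le A B -> False.
Proof.
move=> hA hB [_ /codim1E [v [hv ev]]] hle; apply: hv.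
have : sumsp A B v by rewrite ev; apply: spn_v.
by apply: sum_min.
Qed.

Lemma sG (X : Gr V) : subspace (proj1_sig X).
Proof. exact: (proj1 (proj2_sig X)). Qed.

Lemma line_GL (X Y Z : Gr V) : adjG X Y -> LineG X Y Z <-> GL X Y Z.
Proof.
move=> hXY; have hX := sG X; have hY := sG Y; have hZ := sG Z.
have [x [y [hx [nx [hy [ny [ex [ey [e1 e2]]]]]]]]] := adj_struct HK hX hY hXY.
set C := cap (proj1_sig X) (proj1_sig Y) in ex ey.
set S := sumsp (proj1_sig X) (proj1_sig Y) in e1 e2.
have hC : subspace C by apply: sub_cap.
have hS : subspace S by apply: sub_sum.
have nxC : ~ C x by case.
have nyC : ~ C y by case.
have cCX : codim1 C (proj1_sig X) by apply/codim1E; exists x.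
have cXS : codim1 (proj1_sig X) S by apply/codim1E; exists y.
have cYS : codim1 (proj1_sig Y) S by apply/codim1E; exists x.
have hP := pencil_line HK hXY.
have [inX inY] := in_line HK hX hY hXY.
have CX : subsp_le C (proj1_sig X) by move=> t [].
have CY : subsp_le C (proj1_sig Y) by move=> t [].
have XS : subsp_le (proj1_sig X) S by apply: sum_l.
have YS : subsp_le (proj1_sig Y) S by apply: sum_r.
split.
- move=> hL.
  case: (classic (Z = X)) => [->|nZX]; first by left.
  case: (classic (Z = Y)) => [->|nZY]; first by right; left.
  right; right.
  have aZX : adjG Z X by apply: (pencil_adj HK hP).
  have aZY : adjG Z Y by apply: (pencil_adj HK hP).
  split=> //; split=> // W aWX aWY.
  have hW := sG W.
  have [z [nz [ez cZS]]] := pencil_member HK hC hX hS hZ cCX cXS (proj1 hL) (proj2 hL).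
  case: (classic (W = Z)) => [->|nWZ]; first by left.
  right.
  have nWZ' : proj1_sig W <> proj1_sig Z by move=> e; apply: nWZ; apply: Gr_eq.
  case: (common_nb HK hX hY hW hXY aWX aWY) => hle.
  + have [w [nw ew]] := star_of HK hW hX hC aWX hle ex nxC.
    rewrite /adjG ew ez; apply: adj_star => //; by rewrite -ew -ez.
  + have cWS := top_of HK hW hX hS aWX hle e1 ny.
    exact: (adj_top HK hW hZ hS cWS cZS).
- case=> [->|[->|[aZX [aZY hWall]]]]; [exact: inX|exact: inY|].
  have nZX : ~ subsp_le (proj1_sig Z) (proj1_sig X) by apply: adj_not_le.
  have nXZ : ~ subsp_le (proj1_sig X) (proj1_sig Z) by apply: adj_not_le => //; apply: adj_sym.
  have cl1 : subsp_le C (proj1_sig Z) -> subsp_le (proj1_sig Z) S.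
    move=> hCZ; apply: NNPP => hn.
    have [z0 [hz0 nz0]] : exists z0, proj1_sig Z z0 /\ ~ S z0.
      apply: NNPP => h; apply: hn => t ht; apply: NNPP => nt; apply: h; by exists t.
    have [m0 [hm0 nm0]] := dimB HK Hdim (proj2_sig X) hC ex.
    have [H0 [hH0 [_ [nH0 hall]]]] := zorn_hyp HK (@sub_Z0 K V) (nm0 : ~ Z0 m0).
    pose W := cap H0 S.
    have hW : subspace W by apply: sub_cap.
    have m0S : S m0 by apply: XS; apply: CX.
    have nWm0 : ~ W m0 by case.
    have eSW : S = spn W m0.
      apply: le_antisym; last by apply: spn_min => // t [].
      move=> t ht; have [a ha] := hall t; exists a, (t - a *: m0); split; last by rewrite subrK.
      split=> //; apply: subB => //; exact: subZ.
    have cWS : codim1 W S by apply/codim1E; exists m0.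
    have nWX : W <> proj1_sig X by move=> e; apply: nWm0; rewrite e; apply: CX.
    have nWY : W <> proj1_sig Y by move=> e; apply: nWm0; rewrite e; apply: CY.
    have hWG : inG W.
      apply: (adj_inG HK (proj2_sig X) hW); apply: (adj_top HK hX hW hS) => //.
      by move=> e; apply: nWX.
    have [eWZ|] := hWall (exist _ W hWG) (adj_top HK hW hX hS cWS cXS nWX) (adj_top HK hW hY hS cWS cYS nWY).
      apply: nz0; move: hz0; rewrite -eWZ /= /W; by case.
    + rewrite /adjG /= => -[/codim1E [t [nt et]] _].
      have WS : subsp_le W S by move=> q [].
      have Ssum : subsp_le S (sumsp W (proj1_sig Z)).
        rewrite eSW; apply: spn_min; [by apply: sub_sum|by apply: sum_l|].
        by apply: sum_r => //; apply: hCZ.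
      have eS : S = spn W t.
        refine (@hyp_max _ _ HK W S t m0 hW hS nt WS _ m0S nWm0).
        by rewrite -et.
      apply: nz0; rewrite eS -et; by apply: sum_r.
  have cl2 : subsp_le (proj1_sig Z) S -> subsp_le C (proj1_sig Z).
    move=> hZS; apply: NNPP => hn.
    have [m1 [hm1 nm1]] : exists m1, C m1 /\ ~ proj1_sig Z m1.
      apply: NNPP => h; apply: hn => t ht; apply: NNPP => nt; apply: h; by exists t.
    have [u nu] := dimA HK Hdim y (proj2_sig X).
    rewrite -e1 in nu.
    pose W := spn C u.
    have hW : subspace W by apply: sub_spn.
    have nuC : ~ C u by move=> h; apply: nu; apply: XS; apply: CX.
    have nWX : W <> proj1_sig X.
      by move=> e; apply: nu; apply: XS; rewrite -e; apply: spn_v.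
    have nWY : W <> proj1_sig Y.
      by move=> e; apply: nu; apply: YS; rewrite -e; apply: spn_v.
    have aWX : adj W (proj1_sig X) by rewrite /W ex; apply: adj_star => //; rewrite -ex.
    have aWY : adj W (proj1_sig Y) by rewrite /W ey; apply: adj_star => //; rewrite -ey.
    have hWG : inG W by apply: (adj_inG HK (proj2_sig X) hW); apply: adj_sym.
    have := hWall (exist _ W hWG).
    case => //.
    + move=> e; apply: nu; apply: hZS; rewrite -e /=; exact: spn_v.
    + rewrite /adjG /= => -[_ /codim1E [t [nt et]]].
      have cZS := top_of HK hZ hX hS aZX hZS e1 ny.
      have [t' [nt' et']] := proj1 (codim1E _ _) cZS.
      have eS1 : S = spn (proj1_sig Z) m1.
        rewrite et'; symmetry; apply: exch => //; first by rewrite -et'; apply: XS; apply: CX.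
      have Ssum : subsp_le S (sumsp W (proj1_sig Z)).
        rewrite eS1; apply: spn_min; [by apply: sub_sum|by apply: sum_r|].
        apply: sum_l => //; exists 0, m1; by rewrite scale0r addr0.
      have eS : S = spn (proj1_sig Z) t.
        refine (@hyp_max _ _ HK (proj1_sig Z) S t m1 hZ hS nt hZS _ _ nm1).
        * by rewrite -et.
        * by apply: XS; apply: CX.
      apply: nu; rewrite eS -et; apply: sum_l => //; exact: spn_v.
  have [hCZ hZS] : subsp_le C (proj1_sig Z) /\ subsp_le (proj1_sig Z) S.
    case: (common_nb HK hX hY hZ hXY aZX aZY) => h; split=> //; by [apply: cl1|apply: cl2].
  split; split=> //.
  + apply: NNPP => h; apply: nZX => t ht; apply: NNPP => nt; apply: h.
    exists t; split=> //; by move=> hc; apply: nt; apply: CX.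
  + apply: NNPP => h; apply: nXZ => t ht; apply: NNPP => nt; apply: h.
    by exists t; split=> //; apply: XS.
Qed.

End Main.


Section Final.
Variables (K : unitRingType) (V : lmodType K).
Hypothesis HK : forall x : K, x != 0 -> x \is a GRing.unit.
Hypothesis Hdim : dim_gt2 V.

Lemma GL_transport (k g : Gr V -> Gr V) : cancel k g -> cancel g k ->
  (forall X Y, adjG X Y <-> adjG (k X) (k Y)) ->
  forall X Y Z, GL X Y Z -> GL (k X) (k Y) (k Z).
Proof.
move=> kK gK hA X Y Z; rewrite /GL => -[->|[->|[aZX [aZY hW]]]]; [by left|by right; left|right; right].
split; first exact: (proj1 (hA _ _) aZX).
split; first exact: (proj1 (hA _ _) aZY).
move=> W aWX aWY.
have aWX' : adjG (g W) X by apply: (proj2 (hA _ _)); rewrite gK.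
have aWY' : adjG (g W) Y by apply: (proj2 (hA _ _)); rewrite gK.
case: (hW _ aWX' aWY') => [e|a]; [left; by rewrite -e gK|right].
by rewrite -(gK W); apply: (proj1 (hA _ _)).
Qed.

Lemma img_pencil (k g : Gr V -> Gr V) : cancel k g -> cancel g k ->
  (forall X Y, adjG X Y <-> adjG (k X) (k Y)) ->
  forall P, is_pencil P -> is_pencil (image_set k P).
Proof.
move=> kK gK hA P [M [N [hM [hN [[X0 [hMX0 [hX0N [c1 c2]]]] hP]]]]].
have hX0 := sG X0.
have [x [nx eX0]] := proj1 (codim1E _ _) c1.
have [n [nn eN]] := proj1 (codim1E _ _) c2.
pose Y0 := spn M n.
have nMn : ~ M n by move=> h; apply: nn; apply: hMX0.
have hY0 : subspace Y0 by apply: sub_spn.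
have aXY : adj (proj1_sig X0) Y0.
  rewrite eX0; apply: adj_star => //; rewrite -eX0 => e; apply: nn; rewrite e; exact: spn_v.
have hY0G : inG Y0 by apply: (adj_inG HK (proj2_sig X0)).
pose Y0G : Gr V := exist _ Y0 hY0G.
have aXYG : adjG X0 Y0G by [].
have eC : cap (proj1_sig X0) Y0 = M.
  apply: le_antisym; last by move=> t ht; split; [apply: hMX0|apply: spn_le].
  move=> t [ht1 [a [m [hm et]]]].
  case: (classic (a = 0)) => [a0|a0]; first by rewrite et a0 scale0r addr0.
  exfalso; apply: nn.
  have a0' : a != 0 by apply/eqP.
  have -> : n = a^-1 *: t - a^-1 *: m.
    by rewrite et scalerDr addrAC subrr add0r scalerA (invK HK a0') scale1r.
  by apply: subB => //; apply: subZ => //; apply: hMX0.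
have eS : sumsp (proj1_sig X0) Y0 = N by rewrite sum_addv // eN.
have ePL : P = LineG X0 Y0G.
  apply: functional_extensionality => Z; apply: propositional_extensionality.
  by rewrite hP /LineG /Line /= eC eS.
have ek : image_set k P = LineG (k X0) (k Y0G).
  apply: functional_extensionality => Z; apply: propositional_extensionality.
  have aK : adjG (k X0) (k Y0G) by apply: (proj1 (hA _ _)).
  rewrite (line_GL HK Hdim _ aK); split.
  - move=> [Z' [hZ' <-]]; apply: GL_transport => //.
    by rewrite ePL in hZ'; apply/(line_GL HK Hdim).
  - move=> hZ; exists (g Z); split; last exact: gK.
    rewrite ePL; apply/(line_GL HK Hdim) => //.
    rewrite -(kK X0) -(kK Y0G) -[g Z]/(g Z).
    apply: (GL_transport gK kK) => //.
    by move=> X Y; have := hA (g X) (g Y); rewrite !gK /adjG; tauto.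
rewrite ek; apply: pencil_line => //; exact: (proj1 (hA _ _)).
Qed.

End Final.

Unset Implicit Arguments.

Theorem corollary5p1 (K : unitRingType) (V : lmodType K)
  (HK : forall x : K, x != 0 -> x \is a GRing.unit)
  (Hdim : dim_gt2 V)
  (HG : exists X : V -> Prop, inG X)
  (kappa : Gr V -> Gr V) (Hbij : bijective kappa) :
  (forall X Y : Gr V,
      adj (proj1_sig X) (proj1_sig Y) <-> adj (proj1_sig (kappa X)) (proj1_sig (kappa Y)))
  <->
  ((forall P : Gr V -> Prop, is_pencil P -> is_pencil (image_set kappa P)) /\
   (forall P : Gr V -> Prop, is_pencil P -> is_pencil (preimage_set kappa P))).
Proof.
case: Hbij => g kK gK; split.
- move=> hA; split; first exact: (img_pencil HK Hdim kK gK hA).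
  move=> P hP.
  have -> : preimage_set kappa P = image_set g P.
    apply: functional_extensionality => X; apply: propositional_extensionality.
    split; first by move=> h; exists (kappa X); split=> //; rewrite kK.
    by move=> [Z [hZ <-]]; rewrite /preimage_set gK.
  apply: (img_pencil HK Hdim gK kK) => // X Y.
  by have := hA (g X) (g Y); rewrite !gK /adjG; tauto.
- move=> [himg hpre] X Y; split.
  + move=> h; have hQ := himg _ (pencil_line HK h).
    have [inX inY] := in_line HK (sG X) (sG Y) h.
    apply: (pencil_adj HK hQ); [by exists X|by exists Y|].
    move=> e; have eXY : X = Y by rewrite -(kK X) e kK.
    by subst; apply: (adj_irr (sG Y)).
  + move=> h; have hQ := hpre _ (pencil_line HK h).
    have [inX inY] := in_line HK (sG (kappa X)) (sG (kappa Y)) h.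
    apply: (pencil_adj HK hQ) => // e.
    by subst; apply: (adj_irr (sG (kappa Y))).
Qed.
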